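(* For every finite simple graph $G$, $\gamma_{sR}(G\vee K_1)\geq 1$. Moreover, if $\gamma_{sR}(G)=0$, then $\gamma_{sR}(G\vee K_1)=1$.
   Context: For a graph $G=(V,E)$ and $x\in V$, $N_G[x]=\{x\}\cup\{y: xy\in E\}$. A signed Roman dominating function (SRDF) on $G$ is a function $f:V\to\{-1,1,2\}$ such that (a) $\sum_{y\in N_G[x]}f(y)\geq 1$ for every $x\in V$, and (b) every vertex $x$ with $f(x)=-1$ is adjacent to at least one vertex $y$ with $f(y)=2$. The weight of $f$ is $\sum_{x\in V}f(x)$, and $\gamma_{sR}(G)$ is the minimum weight of an SRDF on $G$. The join $G_1\vee G_2$ of two graphs has vertex set $V(G_1)\cup V(G_2)$ (disjoint union) and edge set $E(G_1)\cup E(G_2)\cup\{uv: u\in V(G_1), v\in V(G_2)\}$. $K_1$ is the graph with a single vertex. *)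

(* Defs.v *)
From mathcomp Require Import all_boot all_order all_algebra.
Set Implicit Arguments. Unset Strict Implicit. Unset Printing Implicit Defensive.
Import Order.TTheory GRing.Theory Num.Theory.
Local Open Scope ring_scope.

(* A finite simple graph is a vertex type T : finType with a symmetric,
   irreflexive adjacency relation e : rel T. *)

Definition closed_nbhd (T : finType) (e : rel T) (x y : T) : bool :=
  (y == x) || e x y.

Definition weight (T : finType) (f : T -> int) : int := \sum_(x : T) f x.

Definition dec3 (i : 'I_3) : int :=
  match val i with 0%N => -1 | 1%N => 1 | _ => 2 end.

(* Signed Roman dominating function (boolean): conditions (a) and (b);
   values in {-1,1,2} are enforced by the encoding dec3 below. *)
Definition srdfb (T : finType) (e : rel T) (f : T -> int) : bool :=
  [forall x, 1 <= \sum_(y | closed_nbhd e x y) f y] &&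
  [forall x, (f x == -1) ==> [exists y, e x y && (f y == 2)]].

(* gamma_sR: minimum weight of an SRDF.  The constant function 1 is always an
   SRDF of weight #|T|, so #|T| is a valid neutral element for the minimum. *)
Definition gamma_sR (T : finType) (e : rel T) : int :=
  \big[Order.min/(#|T|%:Z)]_(g : {ffun T -> 'I_3} | srdfb e (fun x => dec3 (g x)))
     weight (fun x => dec3 (g x)).

(* Join G \/ K_1: vertex set option T, with None the new universal vertex. *)
Definition join_K1 (T : finType) (e : rel T) : rel (option T) :=
  fun u v => match u, v with
             | Some x, Some y => e x y
             | None, None => false
             | _, _ => true
             end.

(* Main.v *)
Require Import Defs.
From mathcomp Require Import all_boot all_order all_algebra.
Import Order.TTheory GRing.Theory Num.Theory.
Local Open Scope ring_scope.

Lemma sum_option (T : finType) (P : pred (option T)) (F : option T -> int) :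
  \sum_(o | P o) F o = (if P None then F None else 0) + \sum_(x | P (Some x)) F (Some x).
Proof.
case: ifP => PN.
  rewrite (bigD1 None) //=; congr (_ + _).
  rewrite (reindex_omap Some id); last by case=> [x|] //=; rewrite andbF.
  by apply: eq_bigl => x /=; rewrite eqxx andbT andbT.
rewrite add0r (reindex_omap Some id); last by case=> [x|] // ; rewrite /= PN.
by apply: eq_bigl => x /=; rewrite eqxx andbT.
Qed.

Lemma bigmin_witness (I : finType) (P : pred I) (F : I -> int) (x0 : int) :
  let v := \big[Order.min/x0]_(i | P i) F i in
  v = x0 \/ exists2 i, P i & F i = v.
Proof.
move=> v; rewrite /v; elim/big_ind: _ => [|a b Ha Hb|i Pi]; first by left.
  by rewrite minEle; case: ifP.
by right; exists i.
Qed.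

Definition one3 : 'I_3 := Ordinal (isT : (1 < 3)%N).

Lemma closed_None (T : finType) (e : rel T) y : closed_nbhd (join_K1 e) None y.
Proof. by case: y. Qed.

Theorem mainTheorem2 (T : finType) (e : rel T)
  (e_sym : symmetric e) (e_irr : irreflexive e) :
  1 <= gamma_sR (join_K1 e) /\
  (gamma_sR e = 0 -> gamma_sR (join_K1 e) = 1).
Proof.
have lower : 1 <= gamma_sR (join_K1 e).
  apply: le_bigmin; first by rewrite card_option.
  move=> g /andP[/forallP /(_ None) H _].
  by move: H; rewrite /weight (eq_bigl _ _ (@closed_None T e)).
split=> // g0.
apply/le_anti; rewrite lower andbT.
pose ext (g : {ffun T -> 'I_3}) : {ffun option T -> 'I_3} :=
  [ffun o => if o is Some x then g x else one3].
have key : forall g : {ffun T -> 'I_3}, srdfb e (fun x => dec3 (g x)) ->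
    weight (fun x => dec3 (g x)) = 0 ->
    srdfb (join_K1 e) (fun x => dec3 (ext g x)) &&
    (weight (fun x => dec3 (ext g x)) == 1).
  move=> g /andP[/forallP Ha /forallP Hb] W.
  have Wext : weight (fun x => dec3 (ext g x)) = 1.
    rewrite /weight sum_option /= ffunE /=.
    under eq_bigr do rewrite ffunE.
    by move: W; rewrite /weight => ->.
  rewrite Wext eqxx andbT; apply/andP; split; apply/forallP.
    case=> [x|]; last by rewrite (eq_bigl _ _ (@closed_None T e)); move: Wext; rewrite /weight => ->.
    rewrite sum_option /= ffunE /=.
    under eq_bigr do rewrite ffunE.
    have := Ha x; rewrite /closed_nbhd /=.
    move=> H; apply: le_trans H _.
    have -> : \sum_(i | (Some i == Some x) || e x i) dec3 (g i) = \sum_(y | (y == x) || e x y) dec3 (g y) by apply: eq_bigl => i; rewrite (inj_eq (@Some_inj _)).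
    by rewrite lerDr.
  case=> [x|]; last by rewrite ffunE.
  rewrite ffunE /=; apply/implyP => /(implyP (Hb x)) /existsP[y /andP[exy gy]].
  by apply/existsP; exists (Some y); rewrite /= exy ffunE.
have [T0|[g Pg Wg]] := @bigmin_witness _
   (fun g : {ffun T -> 'I_3} => srdfb e (fun x => dec3 (g x)))
   (fun g => weight (fun x => dec3 (g x))) (#|T|%:Z).
  have T1 : gamma_sR e = #|T|%:Z := T0.
  move: g0; rewrite T1 => /eqP; rewrite eqz_nat => /eqP C.
  pose g : {ffun T -> 'I_3} := [ffun => one3].
  have W : weight (fun x => dec3 (g x)) = 0.
    by rewrite /weight big_pred0 // => x; have := card0_eq C x.
  have P : srdfb e (fun x => dec3 (g x)).
    by apply/andP; split; apply/forallP => x; have := card0_eq C x.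
  have /andP[P' /eqP W'] := key g P W.
  by apply: (bigmin_inf (ext g)) => //; rewrite W'.
have {Wg}Wg0 : weight (fun x => dec3 (g x)) = 0 by rewrite -g0; exact: Wg.
move: Wg0 => Wg.
have /andP[P' /eqP W'] := key g Pg Wg.
by apply: (bigmin_inf (ext g)) => //; rewrite W'.
Qed.
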